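(* Consider the following two-bidder auction with limit price $L=0$. A single good has common value $v$ with CDF $F_v$, density $f_v$, support $\mathbb{R}_+$ and finite mean. Alice submits a bid knowing only $F_v$; then $v$ is realized and Bob, observing $v$ but not Alice's bid, submits a bid; the highest bid wins and pays its bid, receiving $v$ minus the bid; Bob wins ties. Let $\Pi_B$ be Bob's expected profit in the equilibrium in which Bob bids $\mathbb{E}[\tilde v\mid\tilde v<v]$ and Alice draws $v'\sim F_v$ independently and bids $\mathbb{E}[\tilde v\mid\tilde v<v']$. Then, with $v\sim F_v$, $$\Pi_B\ge \mathbb{E}[\max(v-\mathbb{E}[v],0)]\quad\text{and}\quad \Pi_B\ge \mathbb{E}[\max(\mathbb{E}[v]-v,0)].$$
   Context: Bidders are risk neutral; $\tilde v\sim F_v$. *)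

(* Defs.v *)
From HB Require Import structures.
From mathcomp Require Import all_boot all_order all_algebra.
From mathcomp Require Import all_classical all_reals all_analysis.
Set Implicit Arguments. Unset Strict Implicit. Unset Printing Implicit Defensive.
Import Order.TTheory GRing.Theory Num.Theory.
Import numFieldNormedType.Exports.
Local Open Scope classical_set_scope.
Local Open Scope ring_scope.

(* f : R -> R is the density f_v of the common value v (Lebesgue measure). *)

(* CDF  F_v(x) = P(v < x) = int_{(-oo,x)} f  (equal to P(v <= x) since v has a density) *)
Definition cdf (R : realType) (f : R -> R) (x : R) : R :=
  Rintegral (@lebesgue_measure R) `]-oo, x[ f.

(* E[ v~ | v~ < x ] = (int_{(-oo,x)} t f(t) dt) / F_v(x)
   (for x <= 0 the event is null; the value is then 0/0 = 0 by convention,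
   which is irrelevant since it has probability zero) *)
Definition cond_mean_below (R : realType) (f : R -> R) (x : R) : R :=
  Rintegral (@lebesgue_measure R) `]-oo, x[ (fun t => t * f t) / cdf f x.

Definition mean (R : realType) (f : R -> R) : R :=
  Rintegral (@lebesgue_measure R) setT (fun t => t * f t).

(* Bob's expected profit in the stated equilibrium: Bob with value v bids
   b(v) = E[v~ | v~ < v]; Alice draws v' ~ F_v independently and bids b(v');
   Bob wins iff b(v) >= b(v') (Bob wins ties) and then gets v - b(v). *)
Definition bob_profit (R : realType) (f : R -> R) : \bar R :=
  (\int[@lebesgue_measure R]_(v in [set: R])
     \int[@lebesgue_measure R]_(w in [set: R])
       ((v - cond_mean_below f v)
        * ((cond_mean_below f w <= cond_mean_below f v)%R)%:R
        * f v * f w)%:E)%E.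

(* Main.v *)
Require Import Defs.
From HB Require Import structures.
From mathcomp Require Import all_boot all_order all_algebra.
From mathcomp Require Import all_classical all_reals all_analysis.
From mathcomp Require Import ring lra.
Import Order.TTheory GRing.Theory Num.Theory.
Import numFieldNormedType.Exports.
Local Open Scope classical_set_scope.
Local Open Scope ring_scope.

Lemma ge0_le_integralT (R : realType) (g1 g2 : R -> \bar R) :
  (forall x, (0 <= g1 x)%E) -> (forall x, (g1 x <= g2 x)%E) ->
  (\int[@lebesgue_measure R]_(x in setT) g1 x <=
   \int[@lebesgue_measure R]_(x in setT) g2 x)%E.
Proof.
move=> g10 g12.
rewrite !ge0_integralTE //; last by move=> x; exact: le_trans (g10 x) (g12 x).
apply: ereal_sup_le => _ [h /= hg1 <-]; exists h => //= x.
exact: le_trans (hg1 x) (g12 x).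
Qed.

Section S.
Variables (R : realType).
Local Notation mu := (@lebesgue_measure R).
Local Notation INT g := (mu.-integrable setT (EFin \o g)).
Local Notation RI g := (Rintegral mu setT g).

Lemma patch_itv (g : R -> R) v t :
  (g \_ `]-oo, v[) t = if t < v then g t else 0.
Proof. by rewrite patchE mem_setE in_itv /=. Qed.

Lemma restr_int (g : R -> R) v :
  INT g -> INT (g \_ `]-oo, v[) /\
  Rintegral mu `]-oo, v[ g = RI (g \_ `]-oo, v[).
Proof.
move=> ig; split; last exact: Rintegral_mkcond.
rewrite -restrict_EFin.
have mD : measurable (`]-oo, v[ : set R) by exact: measurable_itv.
have := (@integrable_mkcond _ _ _ mu _ (EFin \o g) mD).1.
apply.
exact: (@integrableS _ _ _ mu _ _ _ measurableT mD (@subsetT _ _) ig).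
Qed.

Lemma intZ k (g : R -> R) : INT g -> INT (fun x => k * g x).
Proof.
move=> ig; have := integrableZl measurableT k ig.
by apply: eq_integrable => // x _ /=; rewrite EFinM.
Qed.

Lemma intD (g h : R -> R) : INT g -> INT h -> INT (fun x => g x + h x).
Proof.
move=> ig ih; have := integrableD measurableT ig ih.
by apply: eq_integrable => // x _ /=; rewrite EFinD.
Qed.

Lemma RleT (g h : R -> R) : INT g -> INT h -> (forall x, g x <= h x) ->
  RI g <= RI h.
Proof. by move=> ig ih gh; apply: le_Rintegral => //. Qed.

Lemma RDT (g h : R -> R) : INT g -> INT h ->
  RI (fun x => g x + h x) = RI g + RI h.
Proof. by move=> ig ih; apply: RintegralD. Qed.

Lemma RZT k (g : R -> R) : INT g -> RI (fun x => k * g x) = k * RI g.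
Proof. by move=> ig; apply: RintegralZl. Qed.

End S.
Arguments restr_int {R} g v.
Arguments intZ {R} k {g}.
Arguments intD {R} {g h}.
Arguments RleT {R} {g h}.
Arguments RDT {R} {g h}.
Arguments RZT {R} k {g}.
Theorem corollary2 (R : realType) (f : R -> R)
  (f_meas : measurable_fun setT f)
  (f_ge0 : forall x, 0 <= f x)
  (f_neg : forall x, x < 0 -> f x = 0)
  (f_total : (\int[@lebesgue_measure R]_(x in setT) (f x)%:E = 1)%E)
  (f_supp : forall a b : R, 0 <= a -> a < b ->
     (0 < \int[@lebesgue_measure R]_(x in `[a, b]) (f x)%:E)%E)
  (f_mean : (@lebesgue_measure R).-integrable setT (fun x => (x * f x)%:E)) :
  (\int[@lebesgue_measure R]_(x in setT) (Num.max (x - mean f) 0 * f x)%:E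
     <= bob_profit f)%E /\
  (\int[@lebesgue_measure R]_(x in setT) (Num.max (mean f - x) 0 * f x)%:E
     <= bob_profit f)%E.
Proof.
pose mu := @lebesgue_measure R.
pose m := mean f.
pose F := Defs.cdf f.
pose tf := fun t => t * f t.
pose G := fun v => Rintegral mu `]-oo, v[ tf.
have bE v : cond_mean_below f v = G v / F v by [].
have tf0 t : 0 <= tf t.
  rewrite /tf; have [t0|t0] := ltP t 0; first by rewrite f_neg // mulr0.
  exact: mulr_ge0.
have int_f : mu.-integrable setT (EFin \o f).
  apply/integrableP; split; first exact/measurable_realfun.measurable_EFinP.
  under eq_integral => x _ do rewrite /= ger0_norm //.
  by rewrite f_total ltry.
have int_tf : mu.-integrable setT (EFin \o tf) := f_mean.
have I1 : Rintegral mu setT f = 1 by rewrite /Rintegral f_total.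
have Im : Rintegral mu setT tf = m by [].
have Fr v := restr_int f v int_f.
have Gr v := restr_int tf v int_tf.
have hF0 v : 0 <= F v by rewrite /F /Defs.cdf; apply: Rintegral_ge0 => t _; exact: f_ge0.
have hG0 v : 0 <= G v by rewrite /G; apply: Rintegral_ge0 => t _; exact: tf0.
have hb v : G v <= v * F v.
  rewrite /G (Gr v).2 /F /Defs.cdf (Fr v).2 -RZT; last exact: (Fr v).1.
  apply: RleT; [exact: (Gr v).1| exact: intZ (Fr v).1|] => t.
  rewrite !patch_itv; case: ifP => tv; last by rewrite mulr0.
  by rewrite /tf ler_wpM2r // ltW.
have hc w v : w <= v -> G w + w * F v <= G v + w * F w.
  move=> wv; rewrite /G /F /Defs.cdf (Gr v).2 (Gr w).2 (Fr v).2 (Fr w).2.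
  rewrite -!RZT; [|exact: (Fr w).1|exact: (Fr v).1].
  rewrite -!RDT; [|exact: (Gr v).1|exact: intZ (Fr w).1|exact: (Gr w).1|exact: intZ (Fr v).1].
  apply: RleT; [exact: intD (Gr w).1 (intZ _ (Fr v).1)|exact: intD (Gr v).1 (intZ _ (Fr w).1)|] => t.
  rewrite !patch_itv /tf.
  have := f_ge0 t.
  case: ifP => tw; case: ifP => tv; rewrite ?mulr0 ?addr0 ?add0r.
  - lra.
  - exfalso; move: tv; rewrite (lt_le_trans tw wv) //.
  - move: tw => /negbT; rewrite -leNgt => tw ft; nra.
  - lra.
have hFm w v : w <= v -> F w <= F v.
  move=> wv; rewrite /F /Defs.cdf (Fr v).2 (Fr w).2.
  apply: RleT; [exact: (Fr w).1|exact: (Fr v).1|] => t.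
  rewrite !patch_itv; case: ifP => tw; case: ifP => tv //.
  by move: tv; rewrite (lt_le_trans tw wv).
have hd v : v + G v <= m + v * F v.
  rewrite -Im -[X in X + _]mulr1 -I1 /G (Gr v).2 /F /Defs.cdf (Fr v).2.
  rewrite -(RZT v int_f) -(RZT v (Fr v).1).
  rewrite -(RDT (intZ v int_f) (Gr v).1) -(RDT int_tf (intZ v (Fr v).1)).
  apply: RleT; [exact: intD (intZ _ int_f) (Gr v).1|exact: intD int_tf (intZ _ (Fr v).1)|] => t.
  rewrite !patch_itv /tf.
  have := f_ge0 t.
  case: ifP => tv; rewrite ?mulr0 ?addr0.
  - lra.
  - move: tv => /negbT; rewrite -leNgt => tv ft; nra.
have hmono w v : w < v -> G w / F w <= G v / F v.
  move=> wv; have [Fw0|Fwp] := eqVneq (F w) 0.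
    by rewrite Fw0 invr0 mulr0; apply: divr_ge0.
  have Fwp' : 0 < F w by rewrite lt_neqAle eq_sym Fwp hF0.
  have Fvp : 0 < F v := lt_le_trans Fwp' (hFm _ _ (ltW wv)).
  rewrite ler_pdivrMr // mulrAC ler_pdivlMr //.
  have := hb w; have := hc w v (ltW wv); have := hFm w v (ltW wv); have := hG0 w.
  nra.
have hkey v : (((Num.max (v - m) 0) * f v)%:E <=
    (\int[mu]_(w in [set: R])
       ((v - cond_mean_below f v)
        * ((cond_mean_below f w <= cond_mean_below f v)%R)%:R
        * f v * f w)%:E))%E.
  rewrite !bE.
  set c := v - G v / F v.
  have cF : c * F v = v * F v - G v.
    rewrite /c; have [F0|Fn0] := eqVneq (F v) 0.
      rewrite F0 !mulr0; have := hb v; rewrite F0 mulr0 => h; have := hG0 v; lra.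
    by rewrite mulrBl divfK.
  have k0 : 0 <= c * f v.
    have [F0|Fn0] := eqVneq (F v) 0.
      rewrite /c F0 invr0 mulr0 subr0.
      by have [v0|v0] := ltP v 0; [rewrite f_neg // mulr0 | exact: mulr_ge0].
    have Fp : 0 < F v by rewrite lt_neqAle eq_sym Fn0 hF0.
    apply: mulr_ge0 => //; rewrite /c subr_ge0 ler_pdivrMr //; exact: hb.
  apply: (@le_trans _ _ ((c * f v * F v)%:E)).
    rewrite lee_fin mulrAC cF; apply: ler_wpM2r => //.
    rewrite ge_max; apply/andP; split; first by have := hd v; lra.
    by rewrite subr_ge0.
  have -> : (c * f v * F v)%:E =
      (\int[mu]_(w in setT) ((c * f v * (f \_ `]-oo, v[) w))%:E)%E.
    rewrite /F /Defs.cdf (Fr v).2 -(RZT (c * f v) (Fr v).1).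
    rewrite /Rintegral fineK //; apply: integrable_fin_num => //.
    exact: intZ (Fr v).1.
  apply: ge0_le_integralT => w.
    rewrite lee_fin patch_itv; case: ifP => _; [exact: mulr_ge0 | by rewrite mulr0].
  rewrite lee_fin patch_itv; case: ifP => wv.
    by rewrite !bE (hmono w v wv) /= mulr1n mulr1.
  rewrite mulr0; apply: mulr_ge0 => //; rewrite mulrAC; apply: mulr_ge0 => //.
have part1 : (\int[mu]_(x in setT) (Num.max (x - mean f) 0 * f x)%:E
     <= bob_profit f)%E.
  rewrite /bob_profit; apply: ge0_le_integralT => v; last exact: hkey.
  by rewrite lee_fin; apply: mulr_ge0 => //; rewrite le_max lexx orbT.
split => //.
pose P x := Num.max (x - m) 0 * f x.
pose Q x := Num.max (m - x) 0 * f x.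
have intP : mu.-integrable setT (EFin \o P).
  apply: (le_integrable measurableT _ _ (intD int_tf (intZ `|m| int_f))).
    apply/measurable_realfun.measurable_EFinP; apply: measurable_realfun.measurable_funM => //.
    apply: measurable_realfun.measurable_maxr => //; apply: measurable_realfun.measurable_funB => //.
  move=> x _ /=.
  have P0 : 0 <= P x by apply: mulr_ge0 => //; rewrite le_max lexx orbT.
  have R0 : 0 <= tf x + `|m| * f x by apply: addr_ge0 => //; apply: mulr_ge0.
  rewrite lee_fin (ger0_norm P0) (ger0_norm R0) /P /tf.
  have [x0|x0] := ltP x 0; first by rewrite f_neg // !mulr0 addr0.
  rewrite -mulrDl; apply: ler_wpM2r => //.
  have := ler_norm (-m); rewrite normrN => hm.
  rewrite ge_max; apply/andP; split; first lra.
  by apply: addr_ge0.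
have eQ x : Q x = P x + (-1) * (tf x + (-m) * f x).
  rewrite /Q /P /tf; have [h|h] := leP x m.
    rewrite (@max_l _ _ (m - x) 0) ?subr_ge0 // (@max_r _ _ (x - m) 0) ?subr_le0 //.
    ring.
  rewrite (@max_r _ _ (m - x) 0) ?subr_le0 ?ltW // (@max_l _ _ (x - m) 0) ?subr_ge0 ?ltW //.
  ring.
have intR : mu.-integrable setT (EFin \o (fun x => (-1) * (tf x + (-m) * f x))).
  exact: intZ (intD int_tf (intZ _ int_f)).
have intQ : mu.-integrable setT (EFin \o Q).
  have := intD intP intR; apply: eq_integrable => // x _ /=; by rewrite eQ.
have -> : (\int[mu]_(x in setT) (Num.max (mean f - x) 0 * f x)%:E)%E
    = (Rintegral mu setT Q)%:E.
  by rewrite /Rintegral fineK //; exact: integrable_fin_num.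
suff <- : Rintegral mu setT P = Rintegral mu setT Q.
  by move: part1; rewrite /Rintegral fineK //; exact: integrable_fin_num.
have -> : Rintegral mu setT Q = Rintegral mu setT (fun x => P x + (-1) * (tf x + (-m) * f x)).
  by apply: eq_Rintegral => x _; exact: eQ.
rewrite (RDT intP intR) (RZT (-1) (intD int_tf (intZ _ int_f))).
rewrite (RDT int_tf (intZ _ int_f)) (RZT (-m) int_f) Im I1.
ring.
Qed.
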